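(* Let $f:\mathbb{R}^n\to\mathbb{R}$ satisfy: (A1) $f\in C^\infty(\mathbb{R}^n)$; (A2) there is $M>0$ with $f(x)>0$ for all $x\notin B(0,M)$; (A3) $\nabla f(p)\neq0$ for all $p\in\mathcal{B}:=\{p:f(p)=0\}$, with $\mathcal{B}\neq\emptyset$. Let $d(x)=\min_{q\in\mathcal{B}}\|x-q\|$ and $\Omega_\sigma=\{x:d(x)<\sigma\}$. Let $\beta\in(0,1)$ and let $\sigma_2>0$ be such that for all $p\in\mathcal{B}$ and all $0<r<\sigma_2$ one has $\mathcal{B}\cap B(p,r)\subseteq\Gamma_r(p)$, where $\Gamma_r(p)=\{p+v: |v^T\nabla f(p)|<\beta r\|\nabla f(p)\|\}$. Let $x\in\Omega_{\sigma_2}$, let $p\in\mathcal{B}$ with $d(x)=\|x-p\|$, and let $r=d(x)$. Then the hyperplane \[R=\{p+v:\ v\in\mathbb{R}^n,\ v^T\nabla f(p)=-\mathrm{sgn}(f(x))\,\beta r\|\nabla f(p)\|\}\] satisfies $\mathrm{sgn}(f(y))=-\mathrm{sgn}(f(x))$ for all $y\in R\cap B(p,r)$.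
   Context: $\|\cdot\|$ is the Euclidean norm, $B(p,r)$ the open Euclidean ball, $\mathrm{sgn}$ the sign function. Such a $\sigma_2>0$ exists for every $\beta\in(0,1)$ under (A1)–(A3). *)

(* Defs.v *)
From HB Require Import structures.
From mathcomp Require Import all_boot all_order all_algebra.
From mathcomp Require Import all_classical all_reals all_analysis.
Set Implicit Arguments. Unset Strict Implicit. Unset Printing Implicit Defensive.
Import Order.TTheory GRing.Theory Num.Theory.
Import numFieldNormedType.Exports.
Local Open Scope classical_set_scope.
Local Open Scope ring_scope.

Section Defs.
Variables (R : realType) (n : nat).
Local Notation V := 'rV[R]_n.

(* Euclidean inner product and Euclidean norm on R^n
   (the library norm on matrices is the sup norm, hence not used). *)
Definition dotv (u v : V) : R := \sum_(i < n) u ord0 i * v ord0 i.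
Definition enorm (v : V) : R := Num.sqrt (dotv v v).

Definition eball (p : V) (r : R) : set V := [set y | enorm (y - p) < r].

Definition iter_dir (vs : seq V) (f : V -> R) : V -> R :=
  foldr (fun v g => fun x => 'D_v g x) f vs.

(* C^infinity: every iterated directional derivative exists and is
   (Frechet) differentiable everywhere; hence all partial derivatives of
   every order exist and are continuous. *)
Definition smooth (f : V -> R) : Prop :=
  forall (vs : seq V) (x : V), differentiable (iter_dir vs f) x.

Definition grad (f : V -> R) (p : V) : V :=
  \row_(i < n) 'D_(delta_mx ord0 i : V) f p.

Definition zeroset (f : V -> R) : set V := [set q | f q = 0].

Definition distB (f : V -> R) (x : V) : R :=
  inf [set enorm (x - q) | q in zeroset f].

End Defs.

(* Main.v *)
Require Import Defs.
From HB Require Import structures.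
From mathcomp Require Import all_boot all_order all_algebra.
From mathcomp Require Import all_classical all_reals all_analysis.
From mathcomp Require Import lra ring.
Import Order.TTheory GRing.Theory Num.Theory.
Import numFieldNormedType.Exports.
Local Open Scope classical_set_scope.
Local Open Scope ring_scope.

Section H.
Variables (R : realType) (n : nat).
Local Notation V := 'rV[R]_n.

Lemma msq_ge0 (a : R) : 0 <= a * a.
Proof. by rewrite -expr2 sqr_ge0. Qed.
Lemma dotvDl (u v w : V) : dotv (u + v) w = dotv u w + dotv v w.
Proof. rewrite /dotv -big_split; apply: eq_bigr => i _; by rewrite mxE mulrDl. Qed.
Lemma dotvDr (u v w : V) : dotv w (u + v) = dotv w u + dotv w v.
Proof. rewrite /dotv -big_split; apply: eq_bigr => i _; by rewrite mxE mulrDr. Qed.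
Lemma dotvZl (a : R) (u w : V) : dotv (a *: u) w = a * dotv u w.
Proof. rewrite /dotv mulr_sumr; apply: eq_bigr => i _; by rewrite mxE mulrA. Qed.
Lemma dotvZr (a : R) (u w : V) : dotv w (a *: u) = a * dotv w u.
Proof. rewrite /dotv mulr_sumr; apply: eq_bigr => i _; by rewrite mxE mulrCA. Qed.
Lemma dotvC (u w : V) : dotv u w = dotv w u.
Proof. rewrite /dotv; apply: eq_bigr => i _; by rewrite mulrC. Qed.
Lemma dotv_ge0 (u : V) : 0 <= dotv u u.
Proof. rewrite /dotv; apply: sumr_ge0 => i _; exact: msq_ge0. Qed.
Lemma dotv_gt0 (u : V) : u != 0 -> 0 < dotv u u.
Proof.
move=> u0; rewrite lt0r dotv_ge0 andbT; apply/negP => /eqP/psumr_eq0P H.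
move/eqP: u0; apply; apply/rowP => i; rewrite mxE.
have /eqP := H (fun j _ => msq_ge0 _) i isT; by rewrite mulf_eq0 orbb => /eqP.
Qed.
Lemma enorm_ge0 (u : V) : 0 <= enorm u.
Proof. exact: sqrtr_ge0. Qed.
Lemma enorm_sqr (u : V) : enorm u ^+ 2 = dotv u u.
Proof. by rewrite sqr_sqrtr // dotv_ge0. Qed.
Lemma enormZ (a : R) (u : V) : enorm (a *: u) = `|a| * enorm u.
Proof.
by rewrite /enorm dotvZl dotvZr mulrA -expr2 sqrtrM ?sqr_ge0 // sqrtr_sqr.
Qed.
Lemma enorm_lt (u : V) (r : R) : 0 < r -> (enorm u < r) = (dotv u u < r ^+ 2).
Proof.
by move=> r0; rewrite /enorm -{1}(ger0_norm (ltW r0)) -sqrtr_sqr ltr_sqrt // exprn_gt0.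
Qed.

Lemma seg_sg (f : V -> R) (fc : continuous f) (a b : V) :
  (forall l : R, 0 <= l <= 1 -> f (a + l *: b) != 0) ->
  Num.sg (f a) = Num.sg (f (a + b)).
Proof.
move=> nz.
pose phi := fun l : R => f (a + l *: b).
have phic : continuous phi.
  move=> l; apply: continuous_comp; last exact: fc.
  apply: continuousD; first exact: cst_continuous.
  by apply: continuousZr_tmp.
have ha : phi 0 = f a by rewrite /phi scale0r addr0.
have hb : phi 1 = f (a + b) by rewrite /phi scale1r.
rewrite -ha -hb.
have n0 : phi 0 != 0 by apply: nz; rewrite lexx ler01.
have n1 : phi 1 != 0 by apply: nz; rewrite lexx ler01.
have H : ~ (phi 0 * phi 1 < 0).
  move=> neg.
  have [c c01 hc] : exists2 c, c \in `[0, 1] & phi c = 0.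
    apply: IVT; first exact: ler01.
      exact: continuous_subspaceT.
    case: (ltrgt0P (phi 0)) neg => h0.
    - rewrite pmulr_rlt0 // => h1.
      by rewrite ge_min le_max (ltW h1) (ltW h0) orbT.
    - rewrite nmulr_rlt0 // => h1.
      by rewrite ge_min le_max (ltW h1) (ltW h0) orbT.
    - by rewrite h0 mul0r ltxx.
  move: c01; rewrite in_itv /= => c01.
  by move: (nz c c01); rewrite -/(phi c) hc eqxx.
case: (ltrgt0P (phi 0)) n0 => // h0 _; case: (ltrgt0P (phi 1)) n1 => // h1 _.
all: try by rewrite (gtr0_sg h0) (gtr0_sg h1).
all: try by rewrite (ltr0_sg h0) (ltr0_sg h1).
all: by exfalso; apply: H; nra.
Qed.

Lemma deriv_sign (f : V -> R) (p g : V) (df : differentiable f p) :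
  f p = 0 -> 0 < 'D_g f p -> forall t0 : R, t0 != 0 ->
  exists c : R, [/\ 0 < c, c <= 1 & Num.sg (f (p + (c * t0) *: g)) = Num.sg t0].
Proof.
move=> fp0 D0 t0 t00.
have cv : (fun h : R => h^-1 *: ((f \o shift p) (h *: g) - f p)) @ 0^' --> 'D_g f p.
  by apply: diff_derivable.
have H1 : \forall t \near (0:R)^', 0 < t^-1 *: ((f \o shift p) (t *: g) - f p).
  exact: (cvgr_gt _ cv _ D0).
move: H1; rewrite /prop_near1 /dnbhs /within /= => /nbhs_ballP [e /= e0 He].
have t0p : 0 < `|t0| by rewrite normr_gt0.
pose c := Num.min 1 (e / (2 * `|t0|)).
have c0 : 0 < c by rewrite lt_min ltr01 divr_gt0 // mulr_gt0.
have c1 : c <= 1 by rewrite ge_min lexx.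
exists c; split => //.
have hne : c * t0 != 0 by rewrite mulf_neq0 // gt_eqF.
have hb : ball (0 : R) e (c * t0).
  rewrite /ball /= sub0r normrN normrM (gtr0_norm c0).
  have : c <= e / (2 * `|t0|) by rewrite ge_min lexx orbT.
  move=> ce.
  have : c * `|t0| <= e / 2.
    have := ler_wpM2r (ltW t0p) ce.
    by rewrite invfM -!mulrA mulVf ?gt_eqF // mulr1.
  move=> h; apply: le_lt_trans h _; by rewrite ltr_pdivrMr // ltr_pMr // ltr1n.
have := He _ hb hne.
rewrite /= fp0 subr0 addrC => hpos.
set F := f _ in hpos *.
have -> : F = (c * t0) * ((c * t0)^-1 *: F) by rewrite /GRing.scale /= mulrA mulfV // mul1r.
by rewrite sgrM (gtr0_sg hpos) mulr1 sgrM (gtr0_sg c0) mul1r.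
Qed.

Lemma D_grad (f : V -> R) (p : V) : differentiable f p ->
  'D_(grad f p) f p = dotv (grad f p) (grad f p).
Proof.
move=> df; rewrite deriveE //.
set G := grad f p.
rewrite {1}(row_sum_delta G) linear_sum /dotv; apply: eq_bigr => i _.
rewrite linearZ /= -deriveE // {2}/G mxE.
by [].
Qed.

Lemma distB_zero (f : V -> R) (x : V) : f x = 0 -> distB f x <= 0.
Proof.
move=> fx; rewrite /distB.
have -> : 0 = enorm (x - x) by rewrite subrr /enorm /dotv big1 ?sqrtr0 // => i _; rewrite mxE mul0r.
apply: ge_inf; last by exists x.
by exists 0 => _ [q _ <-]; exact: enorm_ge0.
Qed.
End H.

Theorem corollary1 (R : realType) (n : nat) (f : 'rV[R]_n -> R)
  (A1 : smooth f)
  (A2 : exists M : R, 0 < M /\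
          forall x : 'rV[R]_n, ~ eball 0 M x -> 0 < f x)
  (A3 : (forall p, zeroset f p -> grad f p != 0) /\ zeroset f !=set0)
  (beta : R) (hbeta : 0 < beta < 1)
  (sigma2 : R) (hsigma2 : 0 < sigma2)
  (hGamma : forall p, zeroset f p -> forall r : R, 0 < r < sigma2 ->
      zeroset f `&` eball p r `<=`
      [set p + v | v in [set v | `|dotv v (grad f p)| < beta * r * enorm (grad f p)]])
  (x : 'rV[R]_n) (hx : distB f x < sigma2)
  (p : 'rV[R]_n) (hp : zeroset f p) (hxp : distB f x = enorm (x - p)) :
  let r := distB f x in
  forall y : 'rV[R]_n,
    [set p + v | v in [set v | dotv v (grad f p)
        = - Num.sg (f x) * beta * r * enorm (grad f p)]] y ->
    eball p r y ->
    Num.sg (f y) = - Num.sg (f x).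
Proof.
move=> r y [v0 hv0 <-]; rewrite /eball /= addrC addKr => hy.
have fc : continuous f by move=> z; apply: differentiable_continuous; exact: (A1 [::] z).
have dfp : differentiable f p by exact: (A1 [::] p).
set G := grad f p in hv0 hGamma *.
have G0 : G != 0 by exact: A3.1 p hp.
set N := enorm G in hv0 hGamma *.
have DN : dotv G G = N ^+ 2 by rewrite enorm_sqr.
have N0 : 0 < N by rewrite /N /enorm sqrtr_gt0 dotv_gt0.
have r0 : 0 < r by apply: le_lt_trans hy; exact: enorm_ge0.
have rs : r < sigma2 by [].
have [b0 b1] := andP hbeta.
have fx0 : f x != 0.
  by apply/eqP => /distB_zero; rewrite -/r leNgt r0.
set s := Num.sg (f x) in hv0 *.
have hs : `|s| = 1 by rewrite /s normr_sg fx0.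
pose t0 := - s * beta * r / N.
have ht0n : `|t0| * N = beta * r.
  rewrite /t0 !normrM normrN hs mul1r (gtr0_norm b0) (gtr0_norm r0) normfV (gtr0_norm N0).
  by field; rewrite gt_eqF.
have t00 : t0 != 0.
  apply/eqP => h; move: ht0n; rewrite h normr0 mul0r => /eqP; rewrite eq_sym mulf_eq0.
  by rewrite !gt_eqF.
have sgt0 : Num.sg t0 = - s.
  rewrite /t0 !sgrM sgrN sgr_id sgrV (gtr0_sg b0) (gtr0_sg r0) (gtr0_sg N0).
  by rewrite !mulr1.
pose w := v0 - t0 *: G.
have hw : dotv w G = 0.
  rewrite /w dotvDl -scaleN1r dotvZl dotvZl hv0 DN /t0.
  by field; rewrite gt_eqF.
have hv0w : v0 = t0 *: G + w by rewrite /w addrC subrK.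
clearbody w.
have hwG : dotv G w = 0 by rewrite dotvC.
have hv0v : dotv v0 v0 = t0 ^+ 2 * N ^+ 2 + dotv w w.
  rewrite hv0w !(dotvDl, dotvDr, dotvZl, dotvZr) ?hw ?hwG DN; ring.
have hyv : dotv v0 v0 < r ^+ 2 by rewrite -enorm_lt.
have seg : Num.sg (f (p + t0 *: G)) = Num.sg (f (p + t0 *: G + w)).
  apply: seg_sg => // l /andP [l0 l1]; apply/eqP => fz.
  have := @hGamma p hp r (introT andP (conj r0 rs)) (p + t0 *: G + l *: w).
  case.
    split => //; rewrite /eball /=.
    have -> : p + t0 *: G + l *: w - p = t0 *: G + l *: w by rewrite addrC addrA addKr.
    rewrite enorm_lt //.
    rewrite !(dotvDl, dotvDr, dotvZl, dotvZr) ?hw ?hwG DN.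
    rewrite !mulr0 !addr0 add0r.
    have hww := @dotv_ge0 _ _ w.
    have hl2 : l * l <= 1 by nra.
    have := ler_wpM2r hww hl2; rewrite mul1r -mulrA => h2.
    have : t0 * (t0 * N ^+ 2) = t0 ^+ 2 * N ^+ 2 by rewrite expr2 mulrA.
    lra.
  move=> u /= hu; rewrite -addrA => /addrI hue.
  move: hu; rewrite hue dotvDl !dotvZl hw DN mulr0 addr0.
  rewrite -/G -/N normrM (ger0_norm (sqr_ge0 N)) expr2 mulrA ht0n.
  by rewrite ltxx.
have Dpos : 0 < 'D_G f p by rewrite /G D_grad // dotv_gt0.
have [c [c0 c1 hc]] := @deriv_sign _ _ f p G dfp hp Dpos t0 t00.
have line : Num.sg (f (p + (c * t0) *: G)) = Num.sg (f (p + t0 *: G)).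
  have -> : p + t0 *: G = p + (c * t0) *: G + (t0 - c * t0) *: G.
    by rewrite -addrA -scalerDl; congr (_ + _ *: _); ring.
  apply: seg_sg => // l /andP [l0 l1]; apply/eqP => fz.
  set k := c + l * (1 - c).
  have k0 : 0 < k by rewrite /k; nra.
  have k1 : k <= 1 by rewrite /k; nra.
  have ez : p + (c * t0) *: G + l *: ((t0 - c * t0) *: G) = p + (k * t0) *: G.
    by rewrite -addrA scalerA -scalerDl /k; congr (_ + _ *: _); ring.
  rewrite ez in fz.
  have kt0 : 0 < `|k * t0| by rewrite normr_gt0 mulf_neq0 // (gt_eqF k0).
  pose r' := `|k * t0| * N / beta.
  have r'0 : 0 < r' by rewrite /r' divr_gt0 // mulr_gt0.
  have r'e : r' = k * r.
    rewrite /r' normrM (gtr0_norm k0) -(mulrA k) ht0n.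
    by field; rewrite gt_eqF.
  have r'r : r' <= r by rewrite r'e; nra.
  have := @hGamma p hp r' (introT andP (conj r'0 (le_lt_trans r'r rs))) (p + (k * t0) *: G).
  case.
    split => //; rewrite /eball /=.
    have -> : p + (k * t0) *: G - p = (k * t0) *: G by rewrite addrC addKr.
    rewrite enormZ -/N /r' ltr_pdivlMr //.
    have := mulr_gt0 kt0 N0; nra.
  move=> u /= hu /addrI hue.
  move: hu; rewrite hue dotvZl DN -/G -/N normrM (ger0_norm (sqr_ge0 N)) /r'.
  have -> : beta * (`|k * t0| * N / beta) * N = `|k * t0| * N ^+ 2.
    by field; rewrite gt_eqF.
  by rewrite ltxx.
rewrite hv0w addrA.
by rewrite -seg -line hc sgt0.
Qed.
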